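(* Let $G$ be a scheduling game on $m$ identical machines of speed $1$ in which every job $i$ has processing-time function $p_i(t)=b_i+at$ with $b_i\ge0$ and a common rate $a>0$, and in which all machines use the SBPT (Shortest Basic Processing Time) global priority list, i.e. jobs are ordered in non-decreasing order of $b_i$ (ties broken arbitrarily). Then every pure Nash equilibrium $\sigma$ of $G$ minimizes the total processing time: $\sum_{i\in N}p_i(S_i(\sigma))\le\sum_{i\in N}p_i(S_i(\sigma'))$ for every profile $\sigma'$ of $G$.
   Context: Scheduling game: a finite set $N$ of $n$ jobs (players) and a set $M$ of $m$ machines; machine $j$ has speed $s_j>0$. With a global priority list, all machines share the same bijection $\pi:N\to\{1,\dots,n\}$, and job $u$ has higher priority than $v$ iff $\pi(u)<\pi(v)$. A profile $\sigma\in M^N$ assigns each job to a machine. On machine $j$, the jobs assigned to it, listed in increasing $\pi$-order as $i_1,i_2,\dots$, are processed without idle time: $S_{i_1}(\sigma)=0$, $C_{i_k}(\sigma)=S_{i_k}(\sigma)+p_{i_k}(S_{i_k}(\sigma))/s_j$, $S_{i_{k+1}}(\sigma)=C_{i_k}(\sigma)$. The cost of job $i$ is $C_i(\sigma)$. A pure Nash equilibrium (NE) is a profile in which no job can strictly decrease its completion time by unilaterally changing its machine. *)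

(* Defs.v *)
From HB Require Import structures.
From mathcomp Require Import all_boot all_order all_algebra.
Set Implicit Arguments. Unset Strict Implicit. Unset Printing Implicit Defensive.
Import Order.TTheory GRing.Theory Num.Theory.
Local Open Scope ring_scope.

Section Sched.
Variables (R : realFieldType) (N M : finType).
Variables (s : M -> R) (p : N -> R -> R) (pi : N -> 'I_#|N|).

Definition jobs_on (sigma : N -> M) (j : M) : seq N :=
  sort (fun u v => (pi u <= pi v)%N) (enum [pred i | sigma i == j]).

Fixpoint start_in (sj t : R) (l : seq N) (i : N) : R :=
  match l with
  | [::] => 0
  | k :: l' => if k == i then t else start_in sj (t + p k t / sj) l' i
  end.

Definition start (sigma : N -> M) (i : N) : R :=
  start_in (s (sigma i)) 0 (jobs_on sigma (sigma i)) i.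

Definition completion (sigma : N -> M) (i : N) : R :=
  start sigma i + p i (start sigma i) / s (sigma i).

Definition deviate (sigma : N -> M) (i : N) (j : M) : N -> M :=
  fun k => if k == i then j else sigma k.

Definition is_NE (sigma : N -> M) : Prop :=
  forall (i : N) (j : M), completion sigma i <= completion (deviate sigma i j) i.

Definition total_processing (sigma : N -> M) : R :=
  \sum_(i : N) p i (start sigma i).

End Sched.

(* Main.v *)
From HB Require Import structures.
From mathcomp Require Import all_boot all_order all_algebra.
From mathcomp Require Import ring lra zify.
Require Import Defs.
Import Order.TTheory GRing.Theory Num.Theory.
Local Open Scope ring_scope.

Section S.
Variables (R : realFieldType) (N M : finType) (a : R) (b : N -> R)
  (pi : N -> 'I_#|N|) (g : 'I_#|N| -> N).
Hypotheses (piK : cancel pi g) (gK : cancel g pi) (ha : 0 < a)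
  (hb : forall i, 0 <= b i)
  (hmono : forall u v, (pi u < pi v)%N -> b u <= b v).

Local Notation n := #|N|.
Local Notation q := (1 + a).

Definition jobat (t : nat) : option N := omap g (insub t).

Lemma jobat_pi {t k} : jobat t = Some k -> pi k = t :> nat.
Proof. rewrite /jobat; case: insubP => [o _ <-|] //= [<-]; by rewrite gK. Qed.

Lemma jobat_some k : jobat (pi k) = Some k.
Proof. by rewrite /jobat valK /= piK. Qed.

Lemma jobat_none {t} : jobat t = None -> forall k, pi k != t :> nat.
Proof. move=> h k; apply/eqP => e; by rewrite -e jobat_some in h. Qed.

Lemma pi_inj : injective pi. Proof. exact: can_inj piK. Qed.

Lemma pi_eq u v : (pi u == pi v :> nat) = (u == v).
Proof. apply/eqP/eqP => [e|-> //]; apply: pi_inj; exact: val_inj. Qed.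

Fixpoint LoadB (bb : N -> R) (s : N -> M) (j : M) (t : nat) : R :=
  if t is t'.+1 then
    if jobat t' is Some k then
      (if s k == j then bb k + q * LoadB bb s j t' else LoadB bb s j t')
    else LoadB bb s j t'
  else 0.

Definition stp (x : R) (k : N) : R := x + (b k + a * x) / 1.

Lemma filter_split (l : seq N) t :
  sorted (fun u v => (pi u <= pi v)%N) l ->
  [seq k <- l | (pi k < t.+1)%N] =
  [seq k <- l | (pi k < t)%N] ++ [seq k <- l | pi k == t :> nat].
Proof.
elim: l => //= x l IH hs.
have hall := order_path_min (fun u v w => @leq_trans (pi u) (pi v) (pi w)) hs.
rewrite IH ?(path_sorted hs) //.
case: (ltngtP (pi x) t) => h.
- by rewrite ltnS ltnW.
- by rewrite ltnS leqNgt h.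
- rewrite h ltnSn.
  have -> : [seq k <- l | (pi k < t)%N] = [::] => //.
  rewrite (@eq_in_filter _ _ pred0) ?filter_pred0 // => y yl.
  move/allP: hall => /(_ y yl) /=; rewrite h => ty.
  by rewrite ltnNge ty.
Qed.

Lemma sorted_jobs (s : N -> M) j : sorted (fun u v => (pi u <= pi v)%N) (jobs_on pi s j).
Proof. apply: sort_sorted => u v; exact: leq_total. Qed.

Lemma mem_jobs (s : N -> M) j k : (k \in jobs_on pi s j) = (s k == j).
Proof. by rewrite /jobs_on mem_sort mem_enum inE. Qed.

Lemma uniq_jobs (s : N -> M) j : uniq (jobs_on pi s j).
Proof. by rewrite /jobs_on sort_uniq enum_uniq. Qed.

Lemma filter_at (s : N -> M) j t :
  [seq k <- jobs_on pi s j | pi k == t :> nat] =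
  if jobat t is Some k0 then (if s k0 == j then [:: k0] else [::]) else [::].
Proof.
case E: (jobat t) => [k0|].
- rewrite (@eq_filter _ _ (pred1 k0)); last first.
    by move=> k /=; rewrite -(jobat_pi E) pi_eq.
  case: ifP => h; first by rewrite filter_pred1_uniq ?uniq_jobs ?mem_jobs.
  rewrite (@eq_in_filter _ _ pred0) ?filter_pred0 // => k.
  rewrite mem_jobs /= => skj; apply/eqP => e; by rewrite -e skj in h.
- rewrite (@eq_in_filter _ _ pred0) ?filter_pred0 // => k _ /=.
  exact/negbTE/jobat_none.
Qed.

Lemma loadE (s : N -> M) j t :
  LoadB b s j t = foldl stp 0 [seq k <- jobs_on pi s j | (pi k < t)%N].
Proof.
elim: t => [|t IH].
  by rewrite (@eq_filter _ _ pred0) ?filter_pred0 // => k; rewrite ltn0.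
rewrite filter_split ?sorted_jobs // foldl_cat -IH filter_at /=.
case: (jobat t) => [k|] //; case: ifP => //= _.
rewrite /stp divr1; ring.
Qed.

Lemma start_inE (p : N -> R -> R) sj l i x :
  sorted (fun u v => (pi u <= pi v)%N) l -> i \in l ->
  start_in p sj x l i =
  foldl (fun t k => t + p k t / sj) x [seq k <- l | (pi k < pi i)%N].
Proof.
elim: l x => //= k l IH x hs.
have hall := order_path_min (fun u v w => @leq_trans (pi u) (pi v) (pi w)) hs.
have [<-|ne] := eqVneq k i.
  move=> _; rewrite ltnn (@eq_in_filter _ _ pred0) ?filter_pred0 // => y yl.
  by move/allP: hall => /(_ y yl) /=; rewrite ltnNge => ->.
rewrite in_cons eq_sym (negbTE ne) /= => hi.
have hki : (pi k < pi i)%N.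
  move/allP: hall => /(_ i hi); rewrite leq_eqVlt; case/orP => // /eqP e.
  by move/eqP: ne; case; apply: pi_inj; apply: val_inj.
by rewrite hki /= IH ?(path_sorted hs).
Qed.

Lemma startE (s : N -> M) i :
  start (fun _ => 1) (fun i t => b i + a * t) pi s i = LoadB b s (s i) (pi i).
Proof.
rewrite /start start_inE ?sorted_jobs ?mem_jobs // loadE //.
Qed.


Lemma sum_at t (P : pred N) (F : N -> R) :
  \sum_(i | P i && (pi i == t :> nat)) F i =
  if jobat t is Some k then (if P k then F k else 0) else 0.
Proof.
case E: (jobat t) => [k|].
- case Pk: (P k).
    rewrite (big_pred1 k) // => i /=; rewrite -(jobat_pi E) pi_eq.
    by case: eqP => [->|]; rewrite ?Pk ?andbF.
  rewrite big_pred0 // => i; rewrite -(jobat_pi E) pi_eq.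
  by case: eqP => [->|]; rewrite ?Pk ?andbF.
- by rewrite big_pred0 // => i; rewrite (negbTE (jobat_none E i)) andbF.
Qed.

Lemma LoadB_sum (s : N -> M) j t :
  LoadB b s j t = \sum_(i | (s i == j) && (pi i < t)%N) (b i + a * LoadB b s j (pi i)).
Proof.
elim: t => [|t IH]; first by rewrite big_pred0 // => i; rewrite ltn0 andbF.
rewrite (bigID (fun i => pi i == t :> nat)) /=.
rewrite [X in _ = X + _](eq_bigl (fun i => (s i == j) && (pi i == t :> nat))); last first.
  by move=> i; case: (@eqP nat (pi i) t) => [->|]; rewrite ?ltnSn ?andbT ?andbF.
rewrite [X in _ = _ + X](eq_bigl (fun i => (s i == j) && (pi i < t)%N)); last first.
  move=> i; rewrite ltnS leq_eqVlt.
  by case: (@eqP nat (pi i) t) => [->|]; rewrite ?ltnn ?andbF ?andbT.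
rewrite sum_at -IH.
case E: (jobat t) => [k|] /=; last by rewrite add0r.
rewrite (jobat_pi E); case: ifP => _; last by rewrite add0r.
ring.
Qed.

Lemma totalE (s : N -> M) :
  total_processing (fun _ => 1) (fun i t => b i + a * t) pi s = \sum_j LoadB b s j n.
Proof.
rewrite /total_processing (partition_big s predT) //.
apply: eq_bigr => j _; rewrite LoadB_sum.
apply: eq_big => [i|i]; first by rewrite ltn_ord andbT.
by move=> /andP[_ /eqP <-]; rewrite startE.
Qed.

Lemma LoadB_ext bb (s s' : N -> M) j t :
  (forall k, (pi k < t)%N -> s k = s' k) -> LoadB bb s j t = LoadB bb s' j t.
Proof.
elim: t => [//|t IH] h /=.
rewrite IH => [|k hk]; last by apply: h; rewrite ltnS ltnW.
case E: (jobat t) => [k|] //; rewrite h // (jobat_pi E) ltnSn //.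
Qed.

Lemma L_ge0 (s : N -> M) j t : 0 <= LoadB b s j t.
Proof.
elim: t => //= t IH; case: (jobat t) => // k; case: ifP => // _.
have ha' := ha; have := hb k; have : 0 <= q by lra.
move=> h1 h2; apply: addr_ge0 => //; exact: mulr_ge0.
Qed.

Lemma NE_min (s : N -> M) :
  is_NE (fun _ => 1) (fun i t => b i + a * t) pi s ->
  forall i j, LoadB b s (s i) (pi i) <= LoadB b s j (pi i).
Proof.
move=> h i j; have := h i j.
rewrite /completion !startE.
have -> : deviate s i j i = j by rewrite /deviate eqxx.
rewrite (@LoadB_ext b (deviate s i j) s); last first.
  by move=> k hk; rewrite /deviate; case: eqP => // e; rewrite e ltnn in hk.
rewrite !divr1 => H; have ha' := ha; nra.
Qed.


Fixpoint geom (c : nat) : R := if c is c'.+1 then geom c' + q ^+ c' else 0.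

Lemma geomE c : 1 + a * geom c = q ^+ c.
Proof. elim: c => [|c IH] /=; first by rewrite mulr0 addr0 expr0. rewrite exprS -IH; ring. Qed.

Lemma q_ge1 : 1 <= q. Proof. have ha' := ha; lra. Qed.

Lemma geom_ge d K : geom K + d%:R * q ^+ K <= geom (K + d).
Proof.
elim: d => [|d IH]; first by rewrite mul0r addr0 addn0.
rewrite addnS /= -natr1 mulrDl mul1r addrA.
apply: lerD => //; apply: ler_weXn2l; [exact: q_ge1 | exact: leq_addr].
Qed.

Lemma geom_le d c : geom (c + d) <= geom c + d%:R * q ^+ (c + d).
Proof.
elim: d => [|d IH]; first by rewrite mul0r addr0 addn0.
rewrite addnS /= -natr1 mulrDl mul1r addrA.
apply: lerD; last by apply: ler_weXn2l; [exact: q_ge1|exact: leqnSn].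
apply: (le_trans IH); apply: lerD => //; apply: ler_wpM2l; first exact: ler0n.
by apply: ler_weXn2l; [exact: q_ge1|exact: leqnSn].
Qed.

Lemma tangent c K : geom K + q ^+ K * (c%:R - K%:R) <= geom c.
Proof.
case: (leqP K c) => h.
  have := geom_ge (c - K) K; rewrite subnKC // natrB //.
  by rewrite mulrC.
have h' : (c <= K)%N by exact: ltnW.
have := geom_le (K - c) c; rewrite subnKC // natrB //.
move=> H; rewrite mulrBr (mulrC _ c%:R) (mulrC _ K%:R); move: H.
rewrite mulrBl; lra.
Qed.

Lemma conv (u v : M -> nat) :
  (forall A B, (u A <= (u B).+1)%N) -> (\sum_j u j = \sum_j v j)%N ->
  \sum_j geom (u j) <= \sum_j geom (v j).
Proof.
move=> hbal huv.
case: (pickP (@predT M)) => [j0 _|none]; last first.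
  by rewrite !big_pred0 // => j; have := none j.
case: (arg_minnP u (isT : predT j0)) => j1 _ hmin.
set K := u j1.
have eqU j : geom (u j) = geom K + q ^+ K * ((u j)%:R - K%:R).
  have h1 : (K <= u j)%N by exact: hmin.
  have h2 : (u j <= K.+1)%N by exact: hbal.
  case: (ltngtP (u j) K.+1) h2 => // [hl _ | -> _].
    have -> : u j = K by apply/eqP; rewrite eqn_leq h1 -ltnS hl.
    by rewrite subrr mulr0 addr0.
  by rewrite /= -natr1 addrAC subrr add0r mulr1.
rewrite (eq_bigr _ (fun j _ => eqU j)).
have -> : \sum_j (geom K + q ^+ K * ((u j)%:R - K%:R)) =
          \sum_j (geom K + q ^+ K * ((v j)%:R - K%:R)).
  rewrite !big_split /= -!mulr_sumr !sumrB -!natr_sum huv //.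
by apply: ler_sum => j _; exact: tangent.
Qed.


Fixpoint cnt (s : N -> M) (t : nat) (j : M) (tau : nat) : nat :=
  if tau is tau'.+1 then
    if jobat tau' is Some k then
      (if (s k == j) && (t <= tau')%N then (cnt s t j tau').+1 else cnt s t j tau')
    else cnt s t j tau'
  else 0.

Lemma cnt_small s t j tau : (tau <= t)%N -> cnt s t j tau = 0%N.
Proof.
elim: tau => //= tau IH h.
have h' : (t <= tau)%N = false by apply/negbTE; rewrite -ltnNge.
case: (jobat tau) => [k|]; rewrite ?h' ?andbF IH // ltnW //.
Qed.

Lemma cnt_sumS s t tau :
  (\sum_j cnt s t j tau.+1 =
   \sum_j cnt s t j tau + if jobat tau is Some _ then (t <= tau : nat) else 0)%N.
Proof.
rewrite /=; case: (jobat tau) => [k|]; last by rewrite addn0.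
rewrite (eq_bigr (fun j => cnt s t j tau + ((s k == j) && (t <= tau)%N : nat))%N); last first.
  by move=> j _; case: ifP => _; rewrite ?addn1 ?addn0.
rewrite big_split /=; congr (_ + _)%N.
rewrite (bigD1 (s k)) //= eqxx /= big1 ?addn0 // => j /negbTE.
by rewrite eq_sym => ->.
Qed.

Lemma cnt_sum s s' t tau : (\sum_j cnt s t j tau = \sum_j cnt s' t j tau)%N.
Proof.
elim: tau => [|tau IH]; first by rewrite !big1.
by rewrite !cnt_sumS IH.
Qed.

Lemma LoadB_eqb bb bb' s j tau : (forall k, bb k = bb' k) ->
  LoadB bb s j tau = LoadB bb' s j tau.
Proof.
move=> h; elim: tau => //= tau IH; rewrite IH.
by case: (jobat tau) => // k; rewrite h.
Qed.

Lemma LoadB_lin (c : 'I_n -> R) (bbs : 'I_n -> N -> R) s j tau :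
  LoadB (fun k => \sum_t c t * bbs t k) s j tau = \sum_t c t * LoadB (bbs t) s j tau.
Proof.
elim: tau => [|tau IH] /=; first by rewrite big1 // => t _; rewrite mulr0.
rewrite IH; case: (jobat tau) => [k|] //; case: ifP => _ //.
rewrite mulr_sumr -big_split; apply: eq_bigr => t _ /=; ring.
Qed.

Definition ind (t : nat) (k : N) : R := if (t <= pi k)%N then 1 else 0.

Lemma LoadB_ind s t j tau : LoadB (ind t) s j tau = geom (cnt s t j tau).
Proof.
elim: tau => //= tau IH.
case E: (jobat tau) => [k|] //; case: eqP => _ //=.
rewrite /ind (jobat_pi E) IH.
case: (leqP t tau) => h /=.
  rewrite -geomE; ring.
by rewrite cnt_small ?(ltnW h) //= mulr0 addr0.
Qed.

Definition bval (t : nat) : R := if jobat t is Some k then b k else 0.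
Definition prevb (t : nat) : R := if t is t'.+1 then bval t' else 0.
Definition del (t : nat) : R := bval t - prevb t.

Lemma jobat_ord (o : 'I_n) : jobat o = Some (g o).
Proof. by rewrite /jobat valK. Qed.

Lemma tele m : \sum_(t < m.+1) del t = bval m.
Proof.
elim: m => [|m IH]; first by rewrite big_ord1 /del /= subr0.
by rewrite big_ord_recr /= IH /del /=; ring.
Qed.

Lemma b_decomp k : b k = \sum_(t < n) del t * ind t k.
Proof.
rewrite (eq_bigr (fun t : 'I_n => if (t < (pi k).+1)%N then del t else 0)); last first.
  by move=> t _; rewrite /ind ltnS; case: ifP => _; rewrite ?mulr1 ?mulr0.
rewrite -big_mkcond /= -(big_ord_widen _ (fun t => del t)) ?ltn_ord // tele.
by rewrite /bval jobat_some.
Qed.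

Lemma bval_ge0 t : 0 <= bval t.
Proof. by rewrite /bval; case: (jobat t). Qed.

Lemma mono_le u v : (pi u <= pi v)%N -> b u <= b v.
Proof.
rewrite leq_eqVlt; case/orP => [|/hmono //].
by rewrite pi_eq => /eqP ->.
Qed.

Lemma del_ge0 (t : 'I_n) : 0 <= del t.
Proof.
rewrite /del /bval jobat_ord.
case: t => [[|t] ht] /=; first by rewrite subr0.
have ht' : (t < n)%N by exact: ltnW.
have E := jobat_ord (Ordinal ht'); rewrite /= in E.
rewrite /bval E subr_ge0; apply: mono_le.
by rewrite !gK /= leqnSn.
Qed.


Section NE.
Variable (s : N -> M).
Hypothesis hNE : forall i j, LoadB b s (s i) (pi i) <= LoadB b s j (pi i).

Lemma hmin {tau k} : jobat tau = Some k -> forall B, LoadB b s (s k) tau <= LoadB b s B tau.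
Proof. by move=> E B; rewrite -(jobat_pi E); apply: hNE. Qed.

Lemma G_inv tau beta : 0 <= beta -> (forall k, (pi k < tau)%N -> b k <= beta) ->
  forall A B, LoadB b s A tau <= beta + q * LoadB b s B tau.
Proof.
elim: tau => [|tau IH] hbe hk A B /=; first by rewrite mulr0 addr0.

case E: (jobat tau) => [k|]; last first.
  by apply: IH => // k' h; apply: hk; apply: (leq_trans h).
have IH' := IH hbe (fun k h => hk k (leq_trans h (leqnSn _))).
have hk0 : b k <= beta by apply: hk; rewrite (jobat_pi E).
have hm := hmin E.
have b0 := hb k; have ha' := ha.
have nA := L_ge0 s A tau; have nB := L_ge0 s B tau; have nM := L_ge0 s (s k) tau.
have iA := IH' A (s k); have iB := IH' (s k) B.
have mB := hm B.
case: eqP => [eA|nA']; case: eqP => [eB|nB'].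
- rewrite -eA; nra.
- rewrite -eA; nra.
- rewrite -eB in iA *; nra.
- exact: IH'.
Qed.

Section Suffix.
Variable t : nat.
Hypothesis ht : (t < n)%N.
Hypothesis hdel : prevb t < bval t.

Let bt := bval t.

Lemma jobat_lt tau : (tau < n)%N -> exists k, jobat tau = Some k.
Proof. move=> h; exists (g (Ordinal h)); exact: (jobat_ord (Ordinal h)). Qed.

Lemma prevb_ge0 : 0 <= prevb t.
Proof. case: t => //= t'; exact: bval_ge0. Qed.

Lemma bt_gt0 : 0 < bt.
Proof. have := prevb_ge0; rewrite /bt; move: hdel; lra. Qed.

Lemma prev_bound k : (pi k < t)%N -> b k <= prevb t.
Proof.
case: t ht => [|t'] ht' //= h.
have [k' E] := jobat_lt t' (ltnW ht').
rewrite /bval E; apply: mono_le; by rewrite (jobat_pi E) -ltnS.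
Qed.

Lemma bt_le k : (t <= pi k)%N -> bt <= b k.
Proof.
have [kt E] := jobat_lt t ht.
by rewrite /bt /bval E => h; apply: mono_le; rewrite (jobat_pi E).
Qed.

Notation u tau j := (cnt s t j tau).
Notation L tau j := (LoadB b s j tau).

Definition Inv tau :=
  [/\ (forall A B, (u tau A <= (u tau B).+1)%N),
      (forall A B, (u tau B < u tau A)%N -> L tau B < L tau A),
      (forall beta, (forall k, (pi k < tau)%N -> b k <= beta) -> bt <= beta ->
         forall A B, u tau A = u tau B -> L tau A < beta + q * L tau B) &
      (forall beta, (forall k, (pi k < tau)%N -> b k <= beta) -> bt <= beta ->
         forall A B, u tau A = (u tau B).+1 -> L tau A <= beta + q * L tau B)].

Lemma Inv_base : Inv t.
Proof.
split => [A B|A B|beta hbe hbt A B _|beta hbe hbt A B]; rewrite ?cnt_small //.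
have := @G_inv t (prevb t) prevb_ge0 prev_bound A B.
have := hdel; have := L_ge0 s B t; rewrite -/bt; lra.
Qed.

Lemma Inv_step tau : (t <= tau)%N -> Inv tau -> Inv tau.+1.
Proof.
move=> htau [IB IO IE IF].
have ha' := ha; have bt0 := bt_gt0.
case E: (jobat tau) => [k|]; last first.
  have hu j : u tau.+1 j = u tau j by rewrite /= E.
  have hL j : L tau.+1 j = L tau j by rewrite /= E.
  split => [A B|A B|beta hbe hbt A B|beta hbe hbt A B]; rewrite ?hu ?hL.
  - exact: IB.
  - exact: IO.
  - apply: IE => // k' h; apply: hbe; exact: (leq_trans h).
  - apply: IF => // k' h; apply: hbe; exact: (leq_trans h).
have pk := jobat_pi E.
have htk : (t <= tau)%N = true by [].
have hu j : u tau.+1 j = if s k == j then (u tau j).+1 else u tau j.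
  by rewrite /= E htau andbT.
have hL j : L tau.+1 j = if s k == j then b k + q * L tau j else L tau j.
  by rewrite /= E.
have hm := hmin E.
have umin B : (u tau (s k) <= u tau B)%N.
  rewrite leqNgt; apply/negP => /IO h; have := hm B; lra.
have hb0 : bt <= b k by apply: bt_le; rewrite pk.
have hval : forall k', (pi k' < tau)%N -> b k' <= b k.
  by move=> k' h; apply: hmono; rewrite pk.
have IE0 := IE (b k) hval hb0; have IF0 := IF (b k) hval hb0.
have bk0 := hb k.
have nn j := L_ge0 s j tau.
split => [A B|A B|beta hbe hbt A B|beta hbe hbt A B]; rewrite ?hu ?hL.
- have := IB A (s k); have := umin A; have := umin B.
  case: (eqVneq (s k) A) => [<-|nA]; case: (eqVneq (s k) B) => [<-|nB] //; lia.
- have := IB A (s k); have := umin A; have := umin B.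
  case: (eqVneq (s k) A) => [<-|nA]; case: (eqVneq (s k) B) => [<-|nB] //.
  + lia.
  + move=> uB _ _ h; have e : u tau B = u tau (s k) by lia.
    exact: IE0 B (s k) e.
  + lia.
  + move=> _ _ _; exact: IO.
- have hbe' : forall k', (pi k' < tau)%N -> b k' <= beta.
    by move=> k' h; apply: hbe; exact: (leq_trans h).
  have hbk : b k <= beta by apply: hbe; rewrite pk.
  have := nn A; have := nn B; have := nn (s k).
  case: (eqVneq (s k) A) => [<-|nA]; case: (eqVneq (s k) B) => [<-|nB] //.
  + move=> *; nra.
  + move=> nM nB' _ h.
    have := IO B (s k) (ltac:(lia)); nra.
  + move=> nM _ nA' h.
    have := IF0 A (s k) (ltac:(lia)); nra.
  + move=> _ _ _; exact: IE.
- have hbe' : forall k', (pi k' < tau)%N -> b k' <= beta.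
    by move=> k' h; apply: hbe; exact: (leq_trans h).
  have hbk : b k <= beta by apply: hbe; rewrite pk.
  have := nn A; have := nn B; have := nn (s k).
  have := IB A (s k); have := umin A; have := umin B; have := hm B.
  case: (eqVneq (s k) A) => [<-|nA]; case: (eqVneq (s k) B) => [<-|nB] //.
  + lia.
  + move=> *; nra.
  + lia.
  + move=> _ _ _ _ _ _ _; exact: IF.
Qed.

Lemma Inv_all tau : (t <= tau)%N -> Inv tau.
Proof.
elim: tau => [|tau IH] h.
  have e : t = 0%N by lia.
  rewrite -{1}e; exact: Inv_base.
case: (eqVneq t tau.+1) => [<-|ne]; first exact: Inv_base.
apply: Inv_step; [lia | apply: IH; lia].
Qed.

End Suffix.
End NE.


Lemma main (s s' : N -> M) : is_NE (fun _ => 1) (fun i t => b i + a * t) pi s ->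
  total_processing (fun _ => 1) (fun i t => b i + a * t) pi s <=
  total_processing (fun _ => 1) (fun i t => b i + a * t) pi s'.
Proof.
move=> hNE; have hN := @NE_min s hNE.
rewrite !totalE.
have dec s0 j : LoadB b s0 j n = \sum_(t < n) del t * geom (cnt s0 t j n).
  rewrite (LoadB_eqb _ _ s0 j n b_decomp) LoadB_lin.
  by apply: eq_bigr => t _; rewrite LoadB_ind.
rewrite (eq_bigr _ (fun j _ => dec s j)) (eq_bigr _ (fun j _ => dec s' j)).
rewrite [X in X <= _]exchange_big [X in _ <= X]exchange_big /=.
apply: ler_sum => t _; rewrite -!mulr_sumr.
have := del_ge0 t; rewrite le_eqVlt => /orP [/eqP <- | hd]; first by rewrite !mul0r.
apply: ler_wpM2l; first exact: ltW.
apply: conv; last exact: cnt_sum.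
have hd' : prevb t < bval t by move: hd; rewrite /del; lra.
have [IB _ _ _] := @Inv_all s hN t (ltn_ord t) hd' n (ltnW (ltn_ord t)).
exact: IB.
Qed.

End S.

Theorem lemma19 (R : realFieldType) (N M : finType) (a : R) (b : N -> R)
    (pi : N -> 'I_#|N|) :
  bijective pi ->
  0 < a ->
  (forall i, 0 <= b i) ->
  (* SBPT: higher priority implies smaller-or-equal basic processing time *)
  (forall u v, (pi u < pi v)%N -> b u <= b v) ->
  forall sigma : N -> M,
    is_NE (fun _ => 1) (fun i t => b i + a * t) pi sigma ->
    forall sigma' : N -> M,
      total_processing (fun _ => 1) (fun i t => b i + a * t) pi sigma
      <= total_processing (fun _ => 1) (fun i t => b i + a * t) pi sigma'.
Proof.
move=> [g piK gK] ha hb hmono sigma hNE sigma'.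
exact: (@main R N M a b pi g piK gK ha hb hmono sigma sigma' hNE).
Qed.
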